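(* Let $(W,S,A,\alpha,\beta,R)$ be a POMDP, $\gamma\in(0,1)$ a discount factor and $\mu\in\Delta_W$ a start distribution. Then there is a stationary policy $\pi^\ast\in\Delta_{S,A}$ that is deterministic on each $s\in S$ with $|\operatorname{supp}(\beta(s|\cdot))|\le1$ (i.e. $\pi^\ast(\cdot|s)$ is a point mass for each such $s$) and satisfies $\mathcal{R}^\gamma_\mu(\pi^\ast)\ge\mathcal{R}^\gamma_\mu(\pi)$ for all $\pi\in\Delta_{S,A}$.
   Context: A POMDP is a tuple $(W,S,A,\alpha,\beta,R)$ with $W,S,A$ finite sets, $\beta(s|w)$ a Markov kernel from $W$ to $S$, $\alpha(w'|w,a)$ a Markov kernel from $W\times A$ to $W$, and $R\colon W\times A\to\mathbb{R}$. A stationary policy is a Markov kernel $\pi(a|s)$ from $S$ to $A$; $\Delta_{S,A}$ is the set of these. Running $\pi$ means: $w_0\sim\mu$, and at each time $t$ a sensor state $s_t\sim\beta(\cdot|w_t)$ is observed, an action $a_t\sim\pi(\cdot|s_t)$ is chosen, and $w_{t+1}\sim\alpha(\cdot|w_t,a_t)$. The discounted expected reward is $\mathcal{R}^\gamma_\mu(\pi)=\lim_{T\to\infty}\mathbb{E}\big[\sum_{t=0}^{T-1}\gamma^tR(w_t,a_t)\big]$ under this process. $\operatorname{supp}(\beta(s|\cdot))=\{w\colon\beta(s|w)>0\}$. *)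

(* Defs.v *)
From HB Require Import structures.
From mathcomp Require Import all_boot all_order all_algebra.
From mathcomp Require Import all_classical all_reals all_analysis.
Set Implicit Arguments. Unset Strict Implicit. Unset Printing Implicit Defensive.
Import Order.TTheory GRing.Theory Num.Theory.
Import numFieldNormedType.Exports.
Local Open Scope ring_scope.

Section POMDP.
Variable R : realType.

(* k : X -> Y -> R is a Markov kernel from X to Y; k x y = k(y|x). *)
Definition is_kernel (X Y : finType) (k : X -> Y -> R) : Prop :=
  (forall x y, 0 <= k x y) /\ (forall x, \sum_(y : Y) k x y = 1).

Definition is_dist (X : finType) (p : X -> R) : Prop :=
  (forall x, 0 <= p x) /\ \sum_(x : X) p x = 1.

Variables (W S A : finType).
Variables (alpha : (W * A)%type -> W -> R) (beta : W -> S -> R)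
          (rew : W -> A -> R) (gamma : R) (mu : W -> R).

(* Probability, under policy pi and start distribution mu, of the finite
   trajectory w_0 s_0 a_0 w_1 s_1 a_1 ... w_{T-1} s_{T-1} a_{T-1} w_T,
   where ws : 'I_T.+1 -> W, ss : 'I_T -> S, as_ : 'I_T -> A. *)
Definition traj_prob (pi : S -> A -> R) (T : nat)
    (ws : {ffun 'I_T.+1 -> W}) (ss : {ffun 'I_T -> S}) (as_ : {ffun 'I_T -> A}) : R :=
  mu (ws ord0) *
  \prod_(t < T) (beta (ws (widen_ord (leqnSn T) t)) (ss t) * pi (ss t) (as_ t) *
                 alpha (ws (widen_ord (leqnSn T) t), as_ t) (ws (lift ord0 t))).

Definition traj_return (T : nat) (ws : {ffun 'I_T.+1 -> W}) (as_ : {ffun 'I_T -> A}) : R :=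
  \sum_(t < T) gamma ^+ t * rew (ws (widen_ord (leqnSn T) t)) (as_ t).

Definition finite_horizon_value (pi : S -> A -> R) (T : nat) : R :=
  \sum_(ws : {ffun 'I_T.+1 -> W}) \sum_(ss : {ffun 'I_T -> S}) \sum_(as_ : {ffun 'I_T -> A})
    traj_prob pi ws ss as_ * traj_return ws as_.

Definition discounted_reward (pi : S -> A -> R) : R :=
  limn (finite_horizon_value pi).

End POMDP.

(* |supp(beta(s|.))| where beta w s = beta(s|w) *)
Definition supp_size (R : realType) (W S : finType) (beta : W -> S -> R) (s : S) : nat :=
  #|[set w : W | 0 < beta w s]|.

Definition deterministic_at (R : realType) (S A : finType) (pi : S -> A -> R) (s : S) : Prop :=
  exists a : A, forall a' : A, pi s a' = (if a' == a then 1 else 0).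

(* Main.v *)
Require Import Defs.
From HB Require Import structures.
From mathcomp Require Import all_boot all_order all_algebra.
From mathcomp Require Import all_classical all_reals all_analysis.
From mathcomp Require Import ring lra.
Import Order.TTheory GRing.Theory Num.Theory.
Import numFieldNormedType.Exports.
Set Implicit Arguments. Unset Strict Implicit. Unset Printing Implicit Defensive.
Local Open Scope classical_set_scope.
Local Open Scope ring_scope.

Section Comb.
Variable R : realType.

Definition fcons (X : finType) n (x : X) (g : {ffun 'I_n -> X}) : {ffun 'I_n.+1 -> X} :=
  [ffun i => if unlift ord0 i is Some j then g j else x].

Lemma fcons0 (X : finType) n x (g : {ffun 'I_n -> X}) : fcons x g ord0 = x.
Proof. by rewrite ffunE unlift_none. Qed.

Lemma fconsS (X : finType) n x (g : {ffun 'I_n -> X}) j : fcons x g (lift ord0 j) = g j.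
Proof. by rewrite ffunE liftK. Qed.

Lemma big_ffunS (X : finType) n (F : {ffun 'I_n.+1 -> X} -> R) :
  \sum_(f : {ffun 'I_n.+1 -> X}) F f = \sum_(x : X) \sum_(g : {ffun 'I_n -> X}) F (fcons x g).
Proof.
rewrite pair_bigA /=.
rewrite (reindex (fun p : X * {ffun 'I_n -> X} => fcons p.1 p.2)) /=; last first.
  exists (fun f : {ffun 'I_n.+1 -> X} => (f ord0, [ffun j => f (lift ord0 j)])).
    move=> [x g] _ /=; rewrite fcons0; congr pair; apply/ffunP => j.
    by rewrite ffunE fconsS.
  move=> f _ /=; apply/ffunP => i; rewrite ffunE.
  by case: unliftP => [j ->|->]; rewrite ?ffunE.
by apply: eq_bigr => -[x g].
Qed.

Lemma big_ffun0 (X : finType) (F : {ffun 'I_0 -> X} -> R) (g0 : {ffun 'I_0 -> X}) :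
  \sum_(f : {ffun 'I_0 -> X}) F f = F g0.
Proof.
rewrite (big_pred1 g0) // => g /=; symmetry; apply/eqP/ffunP => -[] //.
Qed.
End Comb.

Section Geo.
Variable R : realType.
Variable gamma : R.
Hypothesis g0 : 0 <= gamma.
Hypothesis g1 : gamma < 1.

Lemma geo_small (c eps : R) : 0 < eps -> exists N, forall n, (N <= n)%N -> gamma ^+ n * c < eps.
Proof.
move=> e0.
have hc : 0 < `|c| + 1 by rewrite ltr_wpDl.
have g1' : `|gamma| < 1 by rewrite ger0_norm.
have /cvgrPdist_lt := cvg_expr g1'.
move=> /(_ (eps / (`|c| + 1))) [|N _ HN]; first by rewrite divr_gt0.
exists N => n Nn; have := HN n Nn; rewrite /= sub0r normrN normrX ger0_norm //.
rewrite ltr_pdivlMr // => h.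
apply: (le_lt_trans _ h); rewrite (le_trans (ler_norm _)) //.
rewrite normrM normrX ger0_norm // ler_wpM2l ?exprn_ge0 //.
by rewrite lerDl.
Qed.

Lemma le_geo (x y c : R) : (forall n, x <= y + gamma ^+ n * c) -> x <= y.
Proof.
move=> h; apply/ler_addgt0Pr => e e0.
have [N HN] := geo_small c e0.
by apply: (le_trans (h N)); rewrite lerD2l ltW // HN.
Qed.

Lemma cvg_geo (u : nat -> R) l K : (forall n, `|u n - l| <= gamma ^+ n * K) ->
  u @ \oo --> l.
Proof.
move=> h; apply/cvgrPdist_lt => e e0.
have [N HN] := geo_small K e0.
exists N => // n /= Nn; rewrite distrC; apply: le_lt_trans (h n) _; exact: HN.
Qed.

Lemma lim_geo (u : nat -> R) l K : (forall n, `|u n - l| <= gamma ^+ n * K) ->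
  limn u = l.
Proof. by move=> h; apply: cvg_lim => //; exact: cvg_geo h. Qed.

Lemma cauchy_geo (u : nat -> R) K : (forall n m, (n <= m)%N -> `|u m - u n| <= gamma ^+ n * K) ->
  forall n, `|u n - limn u| <= gamma ^+ n * K.
Proof.
move=> h.
have cu : cvgn u.
  apply/cauchy_cvgP/cauchy_exP => e e0.
  have [N HN] := geo_small K e0.
  exists (u N); exists N => // n /= Nn.
  by rewrite /ball /= distrC; apply: le_lt_trans (h N n Nn) _; exact: HN.
move=> n; apply/ler_addgt0Pr => e e0.
have /cvgrPdist_lt /(_ e e0) [N _ HN] := cu.
have := HN (maxn n N) (leq_maxr _ _) => /= h2.
apply: (le_trans (ler_distD (u (maxn n N)) _ _)).
rewrite distrC; apply: lerD; first by apply: h; rewrite leq_maxl.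
by rewrite distrC ltW.
Qed.
End Geo.

Section POM.
Variables (R : realType) (W S A : finType).
Variables (alpha : (W * A)%type -> W -> R) (beta : W -> S -> R)
          (rew : W -> A -> R) (gamma : R).

Lemma widen0 n : widen_ord (leqnSn n.+1) (ord0 : 'I_n.+1) = ord0.
Proof. exact: val_inj. Qed.

Lemma widenS n (t : 'I_n) :
  widen_ord (leqnSn n.+1) (lift ord0 t) = lift ord0 (widen_ord (leqnSn n) t).
Proof. exact: val_inj. Qed.

Lemma traj_prob_S (nu : W -> R) pi T w0 s0 a0 (ws : {ffun 'I_T.+1 -> W}) ss as_ :
  traj_prob alpha beta nu pi (fcons w0 ws) (fcons s0 ss) (fcons a0 as_) =
  nu w0 * (beta w0 s0 * pi s0 a0) * traj_prob alpha beta (alpha (w0, a0)) pi ws ss as_.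
Proof.
rewrite /traj_prob big_ord_recl widen0 !fcons0 fconsS.
under eq_bigr => t _ do rewrite widenS !fconsS.
by rewrite !mulrA.
Qed.

Lemma traj_return_S T w0 a0 (ws : {ffun 'I_T.+1 -> W}) as_ :
  traj_return rew gamma (fcons w0 ws) (fcons a0 as_) =
  rew w0 a0 + gamma * traj_return rew gamma ws as_.
Proof.
rewrite /traj_return big_ord_recl widen0 !fcons0 expr0 mul1r mulr_sumr; congr (_ + _).
by apply: eq_bigr => t _; rewrite widenS !fconsS exprS mulrA.
Qed.


Lemma big_traj3 T (G : {ffun 'I_T.+2 -> W} -> {ffun 'I_T.+1 -> S} -> {ffun 'I_T.+1 -> A} -> R) :
  \sum_ws \sum_ss \sum_as_ G ws ss as_ =
  \sum_w0 \sum_s0 \sum_a0 \sum_ws \sum_ss \sum_as_ G (fcons w0 ws) (fcons s0 ss) (fcons a0 as_).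
Proof.
rewrite big_ffunS; apply: eq_bigr => w0 _.
under eq_bigr => ws _ do (rewrite big_ffunS; under eq_bigr => s0 _ do
   (under eq_bigr => ss _ do rewrite big_ffunS)).
rewrite exchange_big; apply: eq_bigr => s0 _.
under eq_bigr => ws _ do rewrite exchange_big.
rewrite exchange_big; apply: eq_bigr => a0 _.
apply: eq_bigr => ws _; apply: eq_bigr => ss _ //.
Qed.

Hypothesis kalpha : is_kernel alpha.
Hypothesis kbeta : is_kernel beta.

Lemma sum_traj_prob (pi : S -> A -> R) : is_kernel pi -> forall T (nu : W -> R),
  \sum_(ws : {ffun 'I_T.+1 -> W}) \sum_(ss : {ffun 'I_T -> S}) \sum_(as_ : {ffun 'I_T -> A})
     traj_prob alpha beta nu pi ws ss as_ = \sum_w nu w.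
Proof.
move=> kpi; elim=> [|T IH] nu.
  rewrite big_ffunS; apply: eq_bigr => w0 _.
  rewrite (big_ffun0 _ [ffun i : 'I_0 => w0]).
  rewrite /traj_prob.
  under eq_bigr => ss _ do under eq_bigr => as_ _ do rewrite big_ord0 mulr1 fcons0.
  rewrite sumr_const sumr_const !card_ffun !card_ord !expn0.
  by rewrite mulr1n mulr1n.
rewrite big_traj3; apply: eq_bigr => w0 _.
under eq_bigr => s0 _ do under eq_bigr => a0 _ do
  (under eq_bigr => ws _ do under eq_bigr => ss _ do under eq_bigr => as_ _ do
     rewrite traj_prob_S;
   under eq_bigr => ws _ do under eq_bigr => ss _ do rewrite -mulr_sumr;
   under eq_bigr => ws _ do rewrite -mulr_sumr;
   rewrite -mulr_sumr IH (proj2 kalpha) mulr1).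
under eq_bigr => s0 _ do rewrite -mulr_sumr -mulr_sumr (proj2 kpi) mulr1.
by rewrite -mulr_sumr (proj2 kbeta) mulr1.
Qed.


Lemma sum3_lin (X Y Z : finType) (c1 c2 : R) (F G : X -> Y -> Z -> R) :
  \sum_x \sum_y \sum_z (c1 * F x y z + c2 * G x y z) =
  c1 * (\sum_x \sum_y \sum_z F x y z) + c2 * (\sum_x \sum_y \sum_z G x y z).
Proof.
rewrite !mulr_sumr -big_split; apply: eq_bigr => x _.
rewrite !mulr_sumr -big_split; apply: eq_bigr => y _.
by rewrite !mulr_sumr -big_split.
Qed.

Definition Bop (pi : S -> A -> R) (V : W -> R) (w : W) : R :=
  \sum_s beta w s * \sum_a pi s a * (rew w a + gamma * \sum_w' alpha (w, a) w' * V w').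

Definition Vt pi T := iter T (Bop pi) (fun _ => 0).

Lemma fhv_Vt (pi : S -> A -> R) : is_kernel pi -> forall T (nu : W -> R),
  finite_horizon_value alpha beta rew gamma nu pi T = \sum_w nu w * Vt pi T w.
Proof.
move=> kpi; elim=> [|T IH] nu.
  rewrite /finite_horizon_value /Vt /= big1 ?big1 // => [w _|ws _].
    by rewrite mulr0.
  by apply: big1 => ss _; apply: big1 => as_ _; rewrite /traj_return big_ord0 mulr0.
rewrite /finite_horizon_value big_traj3; apply: eq_bigr => w0 _.
rewrite [Vt pi T.+1 w0]/= -/(Vt pi T) /Bop mulr_sumr; apply: eq_bigr => s0 _.
rewrite mulr_sumr mulr_sumr; apply: eq_bigr => a0 _.
under eq_bigr => ws _ do under eq_bigr => ss _ do under eq_bigr => as_ _ do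
  rewrite traj_prob_S traj_return_S.
have E : forall (c r g t u : R), c * t * (r + g * u) = (c * r) * t + (c * g) * (t * u).
  by move=> *; ring.
under eq_bigr => ws _ do under eq_bigr => ss _ do under eq_bigr => as_ _ do rewrite E.
rewrite (sum3_lin _ _ (fun ws ss as_ => traj_prob alpha beta (alpha (w0, a0)) pi ws ss as_)
   (fun ws ss as_ => traj_prob alpha beta (alpha (w0, a0)) pi ws ss as_ * traj_return rew gamma ws as_)).
rewrite (sum_traj_prob kpi) (proj2 kalpha) mulr1.
rewrite -/(finite_horizon_value alpha beta rew gamma (alpha (w0, a0)) pi T) IH.
by rewrite mulrDr !mulrA mulrDr !mulrA.
Qed.


Lemma convex_bound (X : finType) (p f : X -> R) (c : R) :
  (forall i, 0 <= p i) -> \sum_i p i = 1 -> (forall i, `|f i| <= c) ->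
  `|\sum_i p i * f i| <= c.
Proof.
move=> p0 p1 fc; apply: (le_trans (ler_norm_sum _ _ _)).
apply: (@le_trans _ _ (\sum_i p i * c)); last by rewrite -mulr_suml p1 mul1r.
by apply: ler_sum => i _; rewrite normrM ger0_norm // ler_wpM2l.
Qed.

Definition Mr := \sum_w \sum_a `|rew w a|.
Definition K0 := Mr / (1 - gamma).

Lemma Mr_ge0 : 0 <= Mr.
Proof. by apply: sumr_ge0 => w _; apply: sumr_ge0 => a _. Qed.

Lemma rew_le w a : `|rew w a| <= Mr.
Proof.
rewrite /Mr (bigD1 w) //= (bigD1 a) //= -addrA lerDl.
apply: addr_ge0; first by apply: sumr_ge0.
by apply: sumr_ge0 => ? _; apply: sumr_ge0.
Qed.

Hypothesis g0 : 0 <= gamma.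
Hypothesis g1 : gamma < 1.

Lemma K0_ge0 : 0 <= K0.
Proof. by rewrite /K0 divr_ge0 ?Mr_ge0 // subr_ge0 ltW. Qed.

Lemma K0_eq : Mr + gamma * K0 = K0.
Proof.
have h : 1 - gamma != 0 by rewrite subr_eq0 eq_sym lt_eqF.
by rewrite /K0; field.
Qed.


Lemma Bop_norm (pi : S -> A -> R) (kpi : is_kernel pi) V : (forall w, `|V w| <= K0) -> forall w, `|Bop pi V w| <= K0.
Proof.
move=> hV w; apply: convex_bound => //; [exact: (proj1 kbeta)|exact: (proj2 kbeta)|] => s.
apply: convex_bound => //; [exact: (proj1 kpi)|exact: (proj2 kpi)|] => a.
rewrite -K0_eq; apply: (le_trans (ler_normD _ _)); apply: lerD; first exact: rew_le.
rewrite normrM ger0_norm // ler_wpM2l //.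
apply: convex_bound => //; [exact: (proj1 kalpha)|exact: (proj2 kalpha)].
Qed.

Lemma Bop_contr (pi : S -> A -> R) (kpi : is_kernel pi) V1 V2 c : (forall w, `|V1 w - V2 w| <= c) ->
  forall w, `|Bop pi V1 w - Bop pi V2 w| <= gamma * c.
Proof.
move=> hV w.
have -> : Bop pi V1 w - Bop pi V2 w =
   \sum_s beta w s * \sum_a pi s a * (gamma * \sum_w' alpha (w, a) w' * (V1 w' - V2 w')).
  rewrite /Bop -sumrB; apply: eq_bigr => s _; rewrite -mulrBr -sumrB; congr (_ * _).
  apply: eq_bigr => a _; rewrite -mulrBr; congr (_ * _).
  rewrite opprD addrACA subrr add0r -mulrBr -sumrB; congr (_ * _).
  by apply: eq_bigr => w' _; rewrite mulrBr.
apply: convex_bound => //; [exact: (proj1 kbeta)|exact: (proj2 kbeta)|] => s.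
apply: convex_bound => //; [exact: (proj1 kpi)|exact: (proj2 kpi)|] => a.
rewrite normrM ger0_norm // ler_wpM2l //.
apply: convex_bound => //; [exact: (proj1 kalpha)|exact: (proj2 kalpha)].
Qed.

Lemma Bop_mono (pi : S -> A -> R) (kpi : is_kernel pi) V1 V2 : (forall w, V1 w <= V2 w) -> forall w, Bop pi V1 w <= Bop pi V2 w.
Proof.
move=> hV w; apply: ler_sum => s _; apply: ler_wpM2l; first exact: (proj1 kbeta).
apply: ler_sum => a _; apply: ler_wpM2l; first exact: (proj1 kpi).
rewrite lerD2l ler_wpM2l //; apply: ler_sum => w' _; apply: ler_wpM2l => //.
exact: (proj1 kalpha).
Qed.

Lemma iter_contr (pi : S -> A -> R) (kpi : is_kernel pi) V1 V2 c : (forall w, `|V1 w - V2 w| <= c) ->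
  forall n w, `|iter n (Bop pi) V1 w - iter n (Bop pi) V2 w| <= gamma ^+ n * c.
Proof.
move=> hV; elim=> [|n IH] w /=; first by rewrite expr0 mul1r.
by rewrite exprS -mulrA; apply: (Bop_contr kpi).
Qed.

Lemma Vt_norm (pi : S -> A -> R) (kpi : is_kernel pi) T w : `|Vt pi T w| <= K0.
Proof.
elim: T w => [|T IH] w /=; first by rewrite normr0 K0_ge0.
exact: (Bop_norm kpi).
Qed.

Lemma Vt_cauchy (pi : S -> A -> R) (kpi : is_kernel pi) n m w : (n <= m)%N -> `|Vt pi m w - Vt pi n w| <= gamma ^+ n * K0.
Proof.
move=> nm; rewrite /Vt -(subnKC nm) iterD.
apply: (iter_contr kpi) => w'; rewrite subr0; exact: (Vt_norm kpi).
Qed.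


Definition V pi w := limn (fun T => Vt pi T w).

Lemma V_bound (pi : S -> A -> R) (kpi : is_kernel pi) n w : `|Vt pi n w - V pi w| <= gamma ^+ n * K0.
Proof. by apply: (cauchy_geo g0 g1) => k m km; exact: (Vt_cauchy kpi). Qed.

Lemma V_norm (pi : S -> A -> R) (kpi : is_kernel pi) w : `|V pi w| <= K0.
Proof.
apply: (le_geo g0 g1 (c := K0)) => n.
rewrite -[V pi w](subrK (Vt pi n w)) addrC.
apply: (le_trans (ler_normD _ _)); rewrite lerD ?(Vt_norm kpi) //.
by rewrite distrC (V_bound kpi).
Qed.

Lemma V_fix (pi : S -> A -> R) (kpi : is_kernel pi) w : Bop pi (V pi) w = V pi w.
Proof.
apply/eqP; rewrite -subr_eq0 -normr_le0.
apply: (le_geo g0 g1 (c := K0 + K0)) => n; rewrite add0r.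
have -> : Bop pi (V pi) w - V pi w =
   (Bop pi (V pi) w - Vt pi n.+1 w) + (Vt pi n.+1 w - V pi w) by rewrite addrA subrK.
apply: (le_trans (ler_normD _ _)); rewrite mulrDr; apply: lerD.
  rewrite [Vt pi n.+1 w]/= -/(Vt pi n).
  apply: (le_trans (Bop_contr kpi (c := gamma ^+ n * K0) _ w)).
    by move=> w'; rewrite distrC (V_bound kpi).
  by rewrite mulrA -exprS ler_wpM2r ?K0_ge0 // exprSr ler_piMr ?exprn_ge0 // ltW.
apply: (le_trans (V_bound kpi n.+1 w)).
by rewrite ler_wpM2r ?K0_ge0 // exprSr ler_piMr ?exprn_ge0 // ltW.
Qed.

Lemma DR_eq (pi : S -> A -> R) (kpi : is_kernel pi) (mu : W -> R) : is_dist mu ->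
  discounted_reward alpha beta rew gamma mu pi = \sum_w mu w * V pi w.
Proof.
move=> [mu0 mu1]; apply: (lim_geo g0 g1 (K := K0)) => n.
rewrite (fhv_Vt kpi) -sumrB.
under eq_bigr => w _ do rewrite -mulrBr.
by apply: convex_bound => // w; exact: (V_bound kpi).
Qed.

Lemma improve (pi pi' : S -> A -> R) (kpi : is_kernel pi) (kpi' : is_kernel pi') :
  (forall w, V pi w <= Bop pi' (V pi) w) -> forall w, V pi w <= V pi' w.
Proof.
move=> h.
have up : forall n w, V pi w <= iter n (Bop pi') (V pi) w.
  elim=> [|n IH] w //=.
  apply: (le_trans (h w)); exact: (Bop_mono kpi').
move=> w; apply: (le_geo g0 g1 (c := K0 + K0)) => n.
apply: (le_trans (up n w)).
have h1 := iter_contr kpi' (V1 := V pi) (V2 := fun _ => 0) (c := K0)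
   (fun w' => ltac:(rewrite subr0; exact: (V_norm kpi w'))) n w.
have h2 := V_bound kpi' n w.
rewrite -/(Vt pi' n) in h1.
have := ler_distD (Vt pi' n w) (iter n (Bop pi') (V pi) w) (V pi' w).
move: h1 h2; set a := iter _ _ _ _; set b := Vt _ _ _; set c := V _ _ => h1 h2 h3.
have : `|a - c| <= gamma ^+ n * (K0 + K0) by rewrite mulrDr; apply: (le_trans h3); exact: lerD.
by rewrite ler_norml => /andP[_]; rewrite lerBlDl addrC.
Qed.


Lemma Q_norm x w a : (forall w, `|x w| <= K0) ->
  `|rew w a + gamma * \sum_w' alpha (w, a) w' * x w'| <= K0.
Proof.
move=> hx; rewrite -K0_eq; apply: (le_trans (ler_normD _ _)); apply: lerD; first exact: rew_le.
rewrite normrM ger0_norm // ler_wpM2l //.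
apply: convex_bound => //; [exact: (proj1 kalpha)|exact: (proj2 kalpha)].
Qed.

Definition LipE d := #|A|%:R * d * K0 / (1 - gamma).

Lemma LipE_eq d : #|A|%:R * d * K0 + gamma * LipE d = LipE d.
Proof.
have h : 1 - gamma != 0 by rewrite subr_eq0 eq_sym lt_eqF.
by rewrite /LipE; field.
Qed.

Lemma Bop_lip (pi pi' : S -> A -> R) d x w : 0 <= d -> (forall s a, `|pi s a - pi' s a| <= d) ->
  (forall w, `|x w| <= K0) -> `|Bop pi x w - Bop pi' x w| <= #|A|%:R * d * K0.
Proof.
move=> d0 hd hx.
have -> : Bop pi x w - Bop pi' x w = \sum_s beta w s * \sum_a (pi s a - pi' s a) *
    (rew w a + gamma * \sum_w' alpha (w, a) w' * x w').
  rewrite /Bop -sumrB; apply: eq_bigr => s _; rewrite -mulrBr -sumrB; congr (_ * _).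
  by apply: eq_bigr => a _; rewrite -mulrBl.
apply: convex_bound => //; [exact: (proj1 kbeta)|exact: (proj2 kbeta)|] => s.
apply: (le_trans (ler_norm_sum _ _ _)).
apply: (@le_trans _ _ (\sum_(a : A) d * K0)).
  apply: ler_sum => a _; rewrite normrM; apply: ler_pM => //; exact: Q_norm.
by rewrite sumr_const -[_ * d * K0]mulrA mulr_natl.
Qed.

Lemma V_lip (pi pi' : S -> A -> R) (kpi : is_kernel pi) (kpi' : is_kernel pi') d :
  0 <= d -> (forall s a, `|pi s a - pi' s a| <= d) ->
  forall w, `|V pi w - V pi' w| <= LipE d.
Proof.
move=> d0 hd.
have fin : forall n w, `|Vt pi n w - Vt pi' n w| <= LipE d.
  elim=> [|n IH] w /=.
    rewrite subrr normr0 /LipE; apply: mulr_ge0; last by rewrite invr_ge0 subr_ge0 ltW.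
    by apply: mulr_ge0; [apply: mulr_ge0 => //; apply: ler0n|exact: K0_ge0].
  rewrite -(LipE_eq d).
  rewrite -[Bop pi _ w](subrK (Bop pi' (Vt pi n) w)) -addrA.
  apply: (le_trans (ler_normD _ _)); apply: lerD.
    by apply: Bop_lip => // w'; exact: (Vt_norm kpi).
  exact: (Bop_contr kpi').
move=> w; apply: (le_geo g0 g1 (c := K0 + K0)) => n.
have h1 := V_bound kpi n w; have h2 := V_bound kpi' n w; have h3 := fin n w.
have -> : V pi w - V pi' w = (Vt pi n w - Vt pi' n w) + ((V pi w - Vt pi n w) + (Vt pi' n w - V pi' w)) by ring.
apply: (le_trans (ler_normD _ _)); rewrite mulrDr; apply: lerD => //.
apply: (le_trans (ler_normD _ _)); apply: lerD => //; first by rewrite distrC.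
Qed.


Lemma DR_lip (pi pi' : S -> A -> R) (kpi : is_kernel pi) (kpi' : is_kernel pi') (mu : W -> R) d :
  is_dist mu -> 0 <= d -> (forall s a, `|pi s a - pi' s a| <= d) ->
  `|discounted_reward alpha beta rew gamma mu pi - discounted_reward alpha beta rew gamma mu pi'| <= LipE d.
Proof.
move=> [mu0 mu1] d0 hd; rewrite (DR_eq kpi) ?(DR_eq kpi') //.
rewrite -sumrB; under eq_bigr => w _ do rewrite -mulrBr.
by apply: convex_bound => // w; exact: V_lip.
Qed.

Definition Qf pi w a := rew w a + gamma * \sum_w' alpha (w, a) w' * V pi w'.

Lemma det_improve (pi : S -> A -> R) (kpi : is_kernel pi) (s0 : S) (a0 : A) :
  (supp_size beta s0 <= 1)%N ->
  exists pi' : S -> A -> R, [/\ is_kernel pi', (forall s, s != s0 -> pi' s = pi s),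
    deterministic_at pi' s0 & forall w, V pi w <= V pi' w].
Proof.
move=> hsupp.
pose astar := if [pick w | 0 < beta w s0] is Some ws then [arg max_(a > a0) Qf pi ws a]%O else a0.
pose pi' := fun s a => if s == s0 then (if a == astar then 1 else 0) else pi s a : R.
have ind : forall (F : A -> R), \sum_a (if a == astar then 1 else 0) * F a = F astar.
  move=> F; rewrite (bigD1 astar) //= eqxx mul1r big1 ?addr0 // => a /negbTE ->.
  by rewrite mul0r.
have kpi' : is_kernel pi'.
  split.
    move=> s a; rewrite /pi'; case: (s == s0); last exact: (proj1 kpi).
    by case: (a == astar).
  move=> s; rewrite /pi'; case: (s == s0); last exact: (proj2 kpi).
  by have := ind (fun _ => 1); under eq_bigr => a _ do rewrite mulr1.
exists pi'; split => //.
- by move=> s /negbTE; rewrite /pi' => ->.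
- by exists astar => a'; rewrite /pi' eqxx.
apply: (improve kpi kpi') => w.
rewrite -{1}(V_fix kpi); apply: ler_sum => s _.
rewrite /pi'; case: eqP => [->|_]; last by [].
rewrite ind.
have [b0|bpos] := eqVneq (beta w s0) 0; first by rewrite b0 !mul0r.
have bpos' : 0 < beta w s0 by rewrite lt_neqAle eq_sym bpos (proj1 kbeta).
apply: ler_wpM2l; first exact: (proj1 kbeta).
have -> : astar = [arg max_(a > a0) Qf pi w a]%O.
  rewrite /astar; case: pickP => [ws hws|/(_ w)]; last by rewrite bpos'.
  move: hsupp; rewrite /supp_size => /card_le1_eqP H.
  by rewrite (H ws w) ?inE.
case: (arg_maxP (Qf pi w) (erefl true : predT a0)) => am _ amax.
apply: (@le_trans _ _ (\sum_a pi s0 a * Qf pi w am)).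
  apply: ler_sum => a _; apply: ler_wpM2l; first exact: (proj1 kpi).
  exact: amax.
by rewrite -mulr_suml (proj2 kpi) mul1r.
Qed.

End POM.
Section Cont.
Variable R : realType.

Lemma rV_cont_within n (f : 'rV[R]_n -> R) (D : set 'rV[R]_n) (L : R) : 0 <= L ->
  (forall (x y : 'rV[R]_n) (d : R), D x -> D y -> 0 <= d -> (forall i, `|x ord0 i - y ord0 i| <= d) ->
     `|f x - f y| <= L * d) ->
  {within D, continuous f}.
Proof.
move=> L0 h; apply/subspace_continuousP => x Dx.
apply/cvgrPdist_le => e e0.
have L1 : 0 < L + 1 by rewrite ltr_wpDl.
apply/nbhs_ballP; exists (e / (L + 1)); first by rewrite /= divr_gt0.
move=> y [_ By] Dy /=.
apply: (le_trans (h x y (e / (L + 1)) Dx Dy _ _)).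
- by rewrite divr_ge0 // ltW.
- by move=> i; have := By ord0 i; rewrite /ball /= => /ltW.
rewrite mulrA ler_pdivrMr // mulrC ler_wpM2l ?ltW //.
by rewrite ltrDl ltr01.
Qed.

Lemma rV_cont n (f : 'rV[R]_n -> R) (L : R) : 0 <= L ->
  (forall (x y : 'rV[R]_n) (d : R), 0 <= d -> (forall i, `|x ord0 i - y ord0 i| <= d) ->
     `|f x - f y| <= L * d) ->
  continuous f.
Proof.
move=> L0 h; apply/continuous_subspace_setT; apply: (rV_cont_within L0).
by move=> x y d _ _; exact: h.
Qed.

Variables (S A : finType).
Definition nSA := #|{: S * A}|.
Definition pol (v : 'rV[R]_nSA) : S -> A -> R := fun s a => v ord0 (enum_rank (s, a)).
Definition Kset := [set v : 'rV[R]_nSA | is_kernel (pol v)].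

Lemma Kset_closed : closed Kset.
Proof.
have -> : Kset = (\bigcap_(i in setT) [set v : 'rV[R]_nSA | 0 <= v ord0 i]) `&`
    (\bigcap_(s in setT) [set v : 'rV[R]_nSA | \sum_a v ord0 (enum_rank (s, a)) = 1]).
  apply/seteqP; split => v.
    move=> [h0 h1]; split => i _ /=; last exact: h1.
    by have := h0 (enum_val i).1 (enum_val i).2; rewrite /pol -surjective_pairing enum_valK.
  by move=> [/= h0 h1]; split => [s a|s]; [exact: h0|exact: h1].
apply: closedI; apply: closed_bigI => i _.
  apply: (@preimage_closed _ _ (fun v : 'rV[R]_nSA => v ord0 i) [set x : R | 0 <= x]).
    by move=> x _; exact: coord_continuous.
  exact: closed_ge.
apply: (@preimage_closed _ _ (fun v : 'rV[R]_nSA => \sum_a v ord0 (enum_rank (i, a))) [set x : R | x = 1]).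
  have cf : continuous (fun v : 'rV[R]_nSA => \sum_a v ord0 (enum_rank (i, a))).
    refine (@rV_cont nSA _ #|A|%:R (ler0n _ _) _) => x1 y1 d d0 hd.
    rewrite -sumrB; apply: (le_trans (ler_norm_sum _ _ _)).
    apply: (@le_trans _ _ (\sum_(a : A) d)); first by apply: ler_sum => a _.
    by rewrite sumr_const mulr_natl.
  by move=> x _; exact: cf.
exact: closed_eq.
Qed.

Lemma Kset_compact : compact Kset.
Proof.
apply: (@subclosed_compact _ _ [set v : 'rV[R]_nSA | forall i, `[0, 1]%classic (v ord0 i)]).
- exact: Kset_closed.
- by apply: (@rV_compact R nSA (fun _ => `[0, 1]%classic)) => i; exact: segment_compact.
move=> v [h0 h1] i.
have := h0 (enum_val i).1 (enum_val i).2; have := h1 (enum_val i).1.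
rewrite /pol -surjective_pairing enum_valK => hs hp.
rewrite /= in_itv /= hp /= -hs (bigD1 (enum_val i).2) //= -surjective_pairing enum_valK lerDl.
by apply: sumr_ge0 => a _; exact: h0.
Qed.

End Cont.

Theorem theorem8 (R : realType) (W S A : finType) (a0 : A)
    (alpha : (W * A)%type -> W -> R) (beta : W -> S -> R) (rew : W -> A -> R)
    (gamma : R) (mu : W -> R) :
  is_kernel alpha -> is_kernel beta -> 0 < gamma < 1 -> is_dist mu ->
  exists pistar : S -> A -> R,
    is_kernel pistar /\
    (forall s : S, (supp_size beta s <= 1)%N -> deterministic_at pistar s) /\
    (forall pi : S -> A -> R, is_kernel pi ->
       discounted_reward alpha beta rew gamma mu pistar >=
       discounted_reward alpha beta rew gamma mu pi).
Proof.
move=> ka kb /andP[gpos g1] hmu.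
have g0 : 0 <= gamma by rewrite ltW.
pose f := fun v : 'rV[R]_(nSA S A) => discounted_reward alpha beta rew gamma mu (@pol R S A v).
pose vec := fun pi : S -> A -> R => \row_(i < nSA S A) pi (enum_val i).1 (enum_val i).2.
have polvec : forall pi, @pol R S A (vec pi) = pi.
  move=> pi; apply/funext => s; apply/funext => a.
  by rewrite /pol /vec mxE enum_rankK.
have [c cK cmax] : exists2 c, c \in @Kset R S A & forall t, t \in @Kset R S A -> f t <= f c.
  apply: EVT_max_rV.
  - exists (vec (fun s a => if a == a0 then 1 else 0)); rewrite /Kset /= polvec.
    split => [s a|s]; first by case: (a == a0).
    rewrite (bigD1 a0) //= eqxx big1 ?addr0 // => a /negbTE -> //.
  - exact: Kset_compact.
  - apply: (@rV_cont_within _ _ _ _ (LipE rew gamma 1)).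
      rewrite /LipE mulr1; apply: divr_ge0; last by rewrite subr_ge0 ltW.
      by apply: mulr_ge0; [apply: ler0n|apply: K0_ge0].

    move=> x y d Kx Ky d0 hd.
    have -> : LipE rew gamma 1 * d = LipE rew gamma d by rewrite /LipE; ring.
    rewrite /f; apply: (DR_lip rew ka kb g0 g1 Kx Ky hmu d0) => s a; exact: hd.
have kc : is_kernel (@pol R S A c) by move: cK; rewrite inE.
have opt : forall pi, is_kernel pi -> discounted_reward alpha beta rew gamma mu pi <=
    discounted_reward alpha beta rew gamma mu (@pol R S A c).
  move=> pi kpi; have := cmax (vec pi); rewrite /f polvec; apply.
  by rewrite inE /Kset /= polvec.
have main : forall l : seq S, exists pi : S -> A -> R, [/\ is_kernel pi,
    (forall s, s \in l -> (supp_size beta s <= 1)%N -> deterministic_at pi s) &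
    forall w, V alpha beta rew gamma (@pol R S A c) w <= V alpha beta rew gamma pi w].
  elim=> [|s l [pi [kpi hdet hV]]].
    by exists (@pol R S A c); split.
  have [hs|hs] := leqP (supp_size beta s) 1; last first.
    exists pi; split => // s'; rewrite inE => /orP[/eqP ->|]; first by rewrite leqNgt hs.
    exact: hdet.
  have [pi' [kpi' heq hdets hV']] := det_improve rew ka kb g0 g1 kpi a0 hs.
  exists pi'; split => //.
    move=> s'; rewrite inE; case: (eqVneq s' s) => [-> _ _|ne /= /hdet h /h [a ha]] //.
    by exists a => a'; rewrite heq.
  by move=> w; apply: (le_trans (hV w)).
have [pi [kpi hdet hV]] := main (enum S).
exists pi; split => //; split.
  by move=> s; apply: hdet; rewrite mem_enum.
move=> pi1 kpi1; apply: (le_trans (opt pi1 kpi1)).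
rewrite (DR_eq rew ka kb g0 g1 kc hmu) (DR_eq rew ka kb g0 g1 kpi hmu).
apply: ler_sum => w _; apply: ler_wpM2l; [exact: (proj1 hmu)|exact: hV].
Qed.
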